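(* For every integer $n \geq 0$, $$\int_0^{\pi/2} x\cos^{2n}x\,dx = \frac{\binom{2n}{n}}{2^{2n+2}}\left(\frac{\pi^{2}}{2} - \sum_{k=1}^{n}\frac{2^{2k}}{k^{2}\binom{2k}{k}}\right),$$ and $$\int_0^{\pi/2} x\cos^{2n+1}x\,dx = \frac{2^{2n}}{(2n+1)\binom{2n}{n}}\left(\frac{\pi}{2} - \sum_{k=0}^{n}\frac{\binom{2k}{k}}{2^{2k}(2k+1)}\right).$$
   Context: An empty sum is $0$. *)

(* Defs.v *)
From Stdlib Require Export Reals.
Open Scope R_scope.

(* sumR m n g = g m + g (m+1) + ... + g n  (empty sum = 0 when n < m);
   implemented as sum over j < n+1-m of g (m + j). *)
Fixpoint sumR_aux (m len : nat) (g : nat -> R) : R :=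
  match len with
  | O => 0
  | S l => sumR_aux m l g + g (m + l)%nat
  end.

Definition sumR (m n : nat) (g : nat -> R) : R := sumR_aux m (S n - m) g.

Definition cbin (k : nat) : R := Binomial.C (2 * k) k.

(* Main.v *)
Require Import Defs.
From Stdlib Require Import Reals Lra Lia.
Open Scope R_scope.

Lemma dext f g x l1 l2 : (forall y, f y = g y) -> l1 = l2 ->
  derivable_pt_lim f x l1 -> derivable_pt_lim g x l2.
Proof.
  intros H E D eps he; subst; destruct (D eps he) as [del Hd]; exists del.
  intros h h0 hl; rewrite <- !H; apply Hd; auto.
Qed.

Lemma dmul f g x a b : derivable_pt_lim f x a -> derivable_pt_lim g x b ->
  derivable_pt_lim (fun y => f y * g y) x (a * g x + f x * b).
Proof. intros; apply (derivable_pt_lim_mult f g); auto. Qed.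

Lemma dplus f g x a b : derivable_pt_lim f x a -> derivable_pt_lim g x b ->
  derivable_pt_lim (fun y => f y + g y) x (a + b).
Proof. intros; apply (derivable_pt_lim_plus f g); auto. Qed.

Lemma dscal f c x a : derivable_pt_lim f x a ->
  derivable_pt_lim (fun y => c * f y) x (c * a).
Proof. intros; apply (derivable_pt_lim_scal f c); auto. Qed.

Lemma dcospow k x : derivable_pt_lim (fun y => cos y ^ k) x
   (INR k * cos x ^ Init.Nat.pred k * - sin x).
Proof.
  apply (derivable_pt_lim_comp cos (fun u => u ^ k)).
  apply derivable_pt_lim_cos. apply derivable_pt_lim_pow.
Qed.

Fixpoint A (m : nat) (x : R) {struct m} : R :=
  match m with
  | O => x ^ 2 / 2
  | S O => x * sin x + cos x
  | S (S k as m1) => / INR (S m1) *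
      (x * cos x ^ m1 * sin x + / INR (S m1) * cos x ^ (S m1) + INR m1 * A k x)
  end.

Lemma dA2 m : (forall x, derivable_pt_lim (A m) x (x * cos x ^ m)) /\
              (forall x, derivable_pt_lim (A (S m)) x (x * cos x ^ (S m))).
Proof.
  induction m as [|m [IH1 IH2]].
  - split; intro x.
    + eapply dext with (f := fun y => /2 * (y ^ 2)). intro y; simpl A; idtac; field.
      2: apply dscal, derivable_pt_lim_pow. simpl; field.
    + eapply dext with (f := fun y => y * sin y + cos y). intro; reflexivity.
      2: apply dplus; [apply dmul; [apply derivable_pt_lim_id|apply derivable_pt_lim_sin]|apply derivable_pt_lim_cos].
      simpl. unfold id. ring.
  - split; [exact IH2|]. intro x.
    eapply dext with (f := fun y => / INR (S (S m)) *
      ((y * cos y ^ (S m) * sin y + / INR (S (S m)) * cos y ^ (S (S m))) + INR (S m) * A m y)).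
    { intro y; reflexivity. }
    2:{ apply dscal. apply dplus. apply dplus.
        apply dmul. apply dmul. apply derivable_pt_lim_id. apply dcospow.
        apply derivable_pt_lim_sin. apply dscal, dcospow. apply dscal, IH1. }
    unfold id. simpl Init.Nat.pred.
    assert (Hs : sin x ^ 2 = 1 - cos x ^ 2) by (rewrite <- (sin2_cos2 x); unfold Rsqr; ring).
    replace (INR (S (S m))) with (INR m + 2) by (rewrite !S_INR; ring).
    rewrite S_INR.
    assert (INR m + 2 <> 0) by (pose proof (pos_INR m); lra).
    field_simplify; [|auto].
    replace (sin x ^ 2) with (1 - cos x ^ 2) by (rewrite Hs; ring).
    simpl. field. auto.
Qed.

Lemma ftc f F a b (h : a <= b)
  (C0 : forall x, a <= x <= b -> continuity_pt f x)
  (D : forall x, derivable_pt_lim F x (f x))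
  (pr : Riemann_integrable f a b) : RiemannInt pr = F b - F a.
Proof.
  rewrite (RiemannInt_P20 h (FTC_P1 h C0) pr).
  assert (H1 := RiemannInt_P29 h C0).
  assert (H2 : antiderivative f F a b).
  { split; auto. intros x _. exists (exist _ (f x) (D x)).
    symmetry; apply derive_pt_eq_0; apply D. }
  destruct (antiderivative_Ucte f _ _ _ _ H1 H2) as [c Hc].
  rewrite !Hc; [ring | lra | lra].
Qed.

Definition V m := A m (PI / 2) - A m 0.

Lemma V_int m : exists pr : Riemann_integrable (fun x => x * cos x ^ m) 0 (PI / 2),
   RiemannInt pr = V m.
Proof.
  assert (h : 0 <= PI / 2) by (pose proof PI_RGT_0; lra).
  assert (C : forall x, 0 <= x <= PI/2 -> continuity_pt (fun x => x * cos x ^ m) x).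
  { intros x _. assert (continuity (fun x => x * cos x ^ m)) by reg. apply H. }
  exists (continuity_implies_RiemannInt h C).
  apply ftc; auto. apply dA2.
Qed.

Lemma V0 : V 0 = PI ^ 2 / 8.
Proof. unfold V; simpl; field. Qed.
Lemma V1 : V 1 = PI / 2 - 1.
Proof. unfold V; simpl. rewrite sin_PI2, cos_PI2, sin_0, cos_0. ring. Qed.
Lemma VSS m : V (S (S m)) = / INR (S (S m)) * (INR (S m) * V m - / INR (S (S m))).
Proof.
  unfold V; cbn [A]. rewrite sin_PI2, cos_PI2, sin_0, cos_0.
  rewrite !pow1, !pow_i by lia. ring.
Qed.

Lemma cbin_pos k : 0 < cbin k.
Proof.
  unfold cbin, Binomial.C. apply Rdiv_lt_0_compat.
  apply INR_fact_lt_0. apply Rmult_lt_0_compat; apply INR_fact_lt_0.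
Qed.

Lemma cbinS n : cbin (S n) = cbin n * (2 * (2 * INR n + 1)) / (INR n + 1).
Proof.
  unfold cbin, Binomial.C.
  replace (2 * S n - S n)%nat with (S n) by lia.
  replace (2 * n - n)%nat with n by lia.
  replace (2 * S n)%nat with (S (S (2 * n))) by lia.
  rewrite !fact_simpl, !mult_INR, !S_INR, mult_INR.
  pose proof (INR_fact_neq_0 n). pose proof (INR_fact_neq_0 (2*n)).
  pose proof (pos_INR n). simpl (INR 2).
  field. repeat split; auto; lra.
Qed.

Lemma even_part n : V (2 * n) =
  cbin n / 2 ^ (2 * n + 2) *
       (PI ^ 2 / 2 - sumR 1 n (fun k => 2 ^ (2 * k) / (INR k ^ 2 * cbin k))).
Proof.
  induction n as [|n IH].
  - change (2 * 0)%nat with 0%nat; rewrite V0. unfold sumR; simpl. unfold cbin, Binomial.C; simpl. field.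
  - replace (V (2 * S n)) with (V (S (S (2 * n)))) by (f_equal; lia).
    rewrite VSS, IH.
    unfold sumR. replace (S (S n) - 1)%nat with (S n) by lia.
    replace (S n - 1)%nat with n by lia. cbn [sumR_aux].
    replace (1 + n)%nat with (S n) by lia.
    rewrite cbinS.
    replace (2 * S n + 2)%nat with ((2 * n + 2) + 2)%nat by lia.
    replace (2 * S n)%nat with ((2 * n) + 2)%nat by lia.
    rewrite !pow_add. rewrite !S_INR, mult_INR.
    pose proof (cbin_pos n). pose proof (pos_INR n).
    assert (0 < 2 ^ (2 * n)) by (apply pow_lt; lra).
    assert (0 < 2 ^ (2 * n + 2)) by (apply pow_lt; lra).
    replace (INR 2) with 2 by (simpl; ring). replace (2 ^ 2) with 4 by ring.
    field. repeat split; lra.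
Qed.

Lemma odd_part n : V (2 * n + 1) =
       2 ^ (2 * n) / (INR (2 * n + 1) * cbin n) *
       (PI / 2 - sumR 0 n (fun k => cbin k / (2 ^ (2 * k) * INR (2 * k + 1)))).
Proof.
  induction n as [|n IH].
  - change (2 * 0 + 1)%nat with 1%nat; rewrite V1. unfold sumR; simpl. unfold cbin, Binomial.C; simpl. field.
  - replace (V (2 * S n + 1)) with (V (S (S (2 * n + 1)))) by (f_equal; lia).
    rewrite VSS, IH.
    unfold sumR. replace (S (S n) - 0)%nat with (S (S n)) by lia.
    replace (S n - 0)%nat with (S n) by lia. cbn [sumR_aux].
    replace (0 + S n)%nat with (S n) by lia.
    rewrite cbinS.
    replace (2 * S n)%nat with ((2 * n) + 2)%nat by lia.
    replace (2 * n + 2 + 1)%nat with (S (S (2 * n + 1))) by lia.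
    rewrite !pow_add. rewrite !S_INR, !plus_INR, mult_INR.
    pose proof (cbin_pos n). pose proof (pos_INR n).
    assert (0 < 2 ^ (2 * n)) by (apply pow_lt; lra).
    replace (INR 2) with 2 by (simpl; ring). replace (INR 1) with 1 by reflexivity. replace (2 ^ 2) with 4 by ring.
    replace (0 + n)%nat with n by lia. pose proof (pos_INR (2*n)). field. repeat split; lra.
Qed.

Theorem theorem2p6 (n : nat) :
  (exists pr : Riemann_integrable (fun x => x * cos x ^ (2 * n)) 0 (PI / 2),
     RiemannInt pr =
       cbin n / 2 ^ (2 * n + 2) *
       (PI ^ 2 / 2 - sumR 1 n (fun k => 2 ^ (2 * k) / (INR k ^ 2 * cbin k))))
  /\
  (exists pr : Riemann_integrable (fun x => x * cos x ^ (2 * n + 1)) 0 (PI / 2),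
     RiemannInt pr =
       2 ^ (2 * n) / (INR (2 * n + 1) * cbin n) *
       (PI / 2 - sumR 0 n (fun k => cbin k / (2 ^ (2 * k) * INR (2 * k + 1))))).
Proof.
  split.
  - destruct (V_int (2 * n)) as [pr H]. exists pr. rewrite H. apply even_part.
  - destruct (V_int (2 * n + 1)) as [pr H]. exists pr. rewrite H. apply odd_part.
Qed.
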